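(* Let $A \in \mathbb{C}^{N\times N}$, let $\mathcal{P}$ be a linear subspace of $\mathbb{C}^N$, and let $\{\omega_j\}_{j\in\mathbb{N}} \subset \mathbb{C}\setminus\{0\}$. Let $\mathcal{G}_j$, $j \in \mathbb{N}_0$, be the Sonneveld spaces and $p_{i,j}$ the stabilization polynomials defined from these data (see context). Then for all $i<j$ in $\mathbb{N}_0$, $$\mathcal{G}_j = p_{i,j}(A)\cdot\big(\mathcal{G}_i \cap \mathcal{K}_{j-i}(A^H;\mathcal{P})^{\perp}\big).$$
   Context: For a subspace $\mathcal{T}\le\mathbb{C}^N$ and $j\in\mathbb{N}$, the block Krylov subspace of level $j$ is $\mathcal{K}_j(A;\mathcal{T}) := \operatorname{span}\{A^k \mathcal{T} : k=0,\dots,j-1\}$ (the sum of the subspaces $A^k\mathcal{T}$), and $\mathcal{K}_j(A^H;\mathcal{P})^\perp$ denotes the orthogonal complement of $\mathcal{K}_j(A^H;\mathcal{P})$ in $\mathbb{C}^N$ with respect to the standard Hermitian inner product; $A^H$ is the conjugate transpose. Sonneveld spaces: $\mathcal{G}_0 := \mathbb{C}^N$ and $\mathcal{G}_j := (I - \omega_j A)\cdot(\mathcal{G}_{j-1}\cap \mathcal{P}^\perp)$ for $j\in\mathbb{N}$. Stabilization polynomials: $p_{i,j}(t) := \prod_{k=i+1}^{j}(1-\omega_k t)$ for $j>i\ge 0$. *)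

(* Defs.v *)
(* C^N is modelled by row vectors 'rV[R[i]]_N with R : realType
   (so R[i] is the field of complex numbers); a linear subspace of C^N is the
   row space (mxalgebra, %MS) of a square matrix 'M[R[i]]_N. *)
From HB Require Import structures.
From mathcomp Require Import all_boot all_order all_algebra.
From mathcomp Require Import reals.
From mathcomp.real_closed Require Import complex.
Set Implicit Arguments. Unset Strict Implicit. Unset Printing Implicit Defensive.
Import Order.TTheory GRing.Theory Num.Theory.
Local Open Scope ring_scope.

Section Defs.
Variables (R : realType) (N : nat).
Local Notation C := R[i].

Definition adjH (A : 'M[C]_N) : 'M[C]_N := (map_mx (@conjc R) A)^T.

(* image M . S of the subspace S under the linear map x |-> M x.  A vector x
   of C^N is stored as the row vector x^T, so M x corresponds to x^T *m M^T. *)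
Definition mximg (M S : 'M[C]_N) : 'M[C]_N := (S *m M^T)%MS.

(* orthogonal complement of S w.r.t. the standard Hermitian inner product
   <x, y> = \sum_k x_k * conj(y_k):  x is in S^perp iff x *m (conj S)^T = 0 *)
Definition orthc (S : 'M[C]_N) : 'M[C]_N := kermx (map_mx (@conjc R) S)^T.

Definition krylov (A T : 'M[C]_N) (j : nat) : 'M[C]_N :=
  (\sum_(k < j) mximg (A ^+ k) T)%MS.

Fixpoint sonneveld (A P : 'M[C]_N) (omega : nat -> C) (j : nat) : 'M[C]_N :=
  match j with
  | 0 => 1%:M
  | j'.+1 => mximg (1%:M - omega j'.+1 *: A)
                   (sonneveld A P omega j' :&: orthc P)%MS
  end.

Definition poly_mx (p : {poly C}) (A : 'M[C]_N) : 'M[C]_N :=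
  \sum_(k < size p) p`_k *: A ^+ k.

End Defs.

Definition stabpoly (R : realType) (omega : nat -> R[i]) (i j : nat) : {poly R[i]} :=
  \prod_(i.+1 <= k < j.+1) (1 - omega k *: 'X).

(* Main.v *)
Require Import Defs.
From HB Require Import structures.
From mathcomp Require Import all_boot all_order all_algebra.
From mathcomp Require Import reals.
From mathcomp.real_closed Require Import complex.
Import Order.TTheory GRing.Theory Num.Theory.
Local Open Scope ring_scope.

Set Implicit Arguments.
Section Helpers.
Variable R : realType.
Local Notation C := R[i].
Local Notation cj M := (map_mx (@conjc R) M).

Lemma cjK m n (M : 'M[C]_(m, n)) : cj (cj M) = M.
Proof. by rewrite -map_mx_comp; apply: map_mx_id => z; apply: conjcK. Qed.

Lemma img_subP N (M S : 'M[C]_N) (x : 'rV[C]_N) :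
  reflect (exists2 y : 'rV[C]_N, (y <= S)%MS & x = y *m M^T)
          (x <= mximg M S)%MS.
Proof.
apply: (iffP idP).
  move=> /submxP [D ->]; exists (D *m S); first exact: submxMl.
  by rewrite /mximg mulmxA.
move=> [y /submxP [D ->] ->]; rewrite /mximg -mulmxA; exact: submxMl.
Qed.

Lemma orthc_sym N (S : 'M[C]_N) (x : 'rV[C]_N) :
  (x <= orthc S)%MS = (S *m (cj x)^T == 0).
Proof.
rewrite /orthc sub_kermx.
have -> : x *m (cj S)^T = (cj (S *m (cj x)^T))^T.
  by rewrite map_mxM -map_trmx cjK trmx_mul trmxK.
by rewrite trmx_eq0 map_mx_eq0.
Qed.

Lemma adjX N (A : 'M[C]_N) k : (adjH A ^+ k)^T = cj (A ^+ k).
Proof.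
elim: k => [|k IH].
  by rewrite !expr0 trmx1 map_mx1.
rewrite exprS exprSr -!mulmxE trmx_mul IH map_mxM /adjH; congr (_ *m _); exact: trmxK.
Qed.

Lemma kry_eq N (A P : 'M[C]_N) k (x : 'rV[C]_N) :
  P *m (cj (x *m (A ^+ k)^T))^T = P *m (adjH A ^+ k)^T *m (cj x)^T.
Proof.
rewrite map_mxM trmx_mul adjX -mulmxA; congr (_ *m (_ *m _)).
rewrite -map_trmx; exact: trmxK.
Qed.

Lemma orth_krylov N (A P : 'M[C]_N) m (x : 'rV[C]_N) :
  (x <= orthc (krylov (adjH A) P m))%MS <->
  (forall k, (k < m)%N -> (x *m (A ^+ k)^T <= orthc P)%MS).
Proof.
rewrite orthc_sym -sub_kermx; split.
  move=> /sumsmx_subP H k km; have := H (Ordinal km) isT.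
  by rewrite sub_kermx orthc_sym /mximg /= kry_eq.
move=> H; apply/sumsmx_subP => k _; have := H k (ltn_ord k).
by rewrite sub_kermx orthc_sym /mximg /= kry_eq.
Qed.

Lemma lead_orth N (A P : 'M[C]_N) (p : {poly C}) m (x : 'rV[C]_N) :
  (forall k, (m < k)%N -> p`_k = 0) -> p`_m != 0 ->
  (forall k, (k < m)%N -> (x *m (A ^+ k)^T <= orthc P)%MS) ->
  (x *m (poly_mx p A)^T <= orthc P)%MS = (x *m (A ^+ m)^T <= orthc P)%MS.
Proof.
move=> Hhi Hm Hlo; rewrite /orthc !sub_kermx.
have msz : (m < size p)%N.
  by rewrite ltnNge; apply/negP => /(nth_default 0); apply/eqP.
suff -> : x *m (poly_mx p A)^T *m (cj P)^T = p`_m *: (x *m (A ^+ m)^T *m (cj P)^T).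
  by rewrite scaler_eq0 (negPf Hm).
rewrite /poly_mx linear_sum /= mulmx_sumr mulmx_suml.
rewrite (bigD1 (Ordinal msz)) //= big1 ?addr0.
  by rewrite linearZ /= -scalemxAr -scalemxAl.
move=> k /eqP neq; rewrite linearZ /= -scalemxAr -scalemxAl.
case: (ltngtP k m) => [km|mk|km].
- by have := Hlo k km; rewrite /orthc sub_kermx => /eqP ->; rewrite scaler0.
- by rewrite Hhi // scale0r.
- by exfalso; apply: neq; apply: val_inj.
Qed.

Lemma stab_rec (omega : nat -> C) i m :
  stabpoly omega i (i + m).+1 = stabpoly omega i (i + m) * (1 - omega (i + m).+1 *: 'X).
Proof. by rewrite /stabpoly big_nat_recr //= ltnS leq_addr. Qed.

Lemma stab_coef (omega : nat -> C) (homega : forall j : nat, (0 < j)%N -> omega j != 0) i m :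
  (forall k, (m < k)%N -> (stabpoly omega i (i + m))`_k = 0) /\
  (stabpoly omega i (i + m))`_m != 0.
Proof.
elim: m => [|m [IH1 IH2]].
  rewrite addn0 /stabpoly big_geq //; split; last by rewrite coef1 oner_neq0.
  by move=> k k0; rewrite coef1; case: k k0.
rewrite addnS stab_rec mulrBr mulr1 -scalerAr; split.
  move=> k mk; rewrite coefB coefZ coefMX.
  case: k mk => [//|k] /= mk; rewrite !IH1 ?mulr0 ?subr0 //.
  by apply: ltn_trans mk.
rewrite coefB coefZ coefMX /= IH1 // sub0r oppr_eq0 mulf_neq0 //.
exact: homega.
Qed.

Lemma poly_horner n (A : 'M[C]_n.+1) (p : {poly C}) : poly_mx p A = horner_mx A p.
Proof.
transitivity (horner_mx A (\poly_(k < size p) p`_k)); last by rewrite coefK.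
rewrite poly_def linear_sum /=; apply: eq_bigr => k _.
by rewrite linearZ /= rmorphXn /= horner_mx_X.
Qed.

End Helpers.
Unset Implicit Arguments.

Theorem lemma1 (R : realType) (N : nat) (A P : 'M[R[i]]_N) (omega : nat -> R[i])
    (homega : forall j : nat, (0 < j)%N -> omega j != 0)
    (i j : nat) (hij : (i < j)%N) :
  (sonneveld A P omega j ==
     mximg (poly_mx (stabpoly omega i j) A)
           (sonneveld A P omega i :&: orthc (krylov (adjH A) P (j - i)))%MS)%MS.
Proof.
case: N A P => [|n] A P.
  have E : forall M M' : 'M[R[i]]_0, (M <= M')%MS by move=> M M'; rewrite flatmx0 sub0mx.
  by apply/andP; split; apply: E.
have eqv : forall S T : 'M[R[i]]_n.+1,
    (forall x : 'rV_n.+1, (x <= S)%MS = (x <= T)%MS) -> (S == T)%MS.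
  move=> S T H; apply/andP; split; apply/row_subP => k.
    by rewrite -H row_sub.
  by rewrite H row_sub.
have main : forall m (x : 'rV_n.+1), (x <= sonneveld A P omega (i + m))%MS =
  (x <= mximg (poly_mx (stabpoly omega i (i + m)) A)
        (sonneveld A P omega i :&: orthc (krylov (adjH A) P m)))%MS.
  elim=> [|m IH] x.
    rewrite addn0 /stabpoly big_geq // poly_horner rmorph1 /mximg trmx1 mulmx1.
    rewrite sub_capmx (_ : (x <= orthc _)%MS = true) ?andbT //.
    by apply/orth_krylov.
  set Q := poly_mx (stabpoly omega i (i + m)) A.
  have HQ : poly_mx (stabpoly omega i (i + m.+1)) A = (1 - omega (i + m).+1 *: A) *m Q.
    rewrite addnS stab_rec /Q !poly_horner mulrC rmorphM /= rmorphB /= rmorph1.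
    by rewrite linearZ /= horner_mx_X mulmxE.
  have [c1 c2] := @stab_coef R omega homega i m.
  have Kspl : forall z : 'rV_n.+1, (z <= orthc (krylov (adjH A) P m.+1))%MS <->
      (z <= orthc (krylov (adjH A) P m))%MS /\ (z *m (A ^+ m)^T <= orthc P)%MS.
    move=> z; split.
      move/orth_krylov => H; split; last by apply: H.
      by apply/orth_krylov => k km; apply: H; apply: ltnW.
    move=> [/orth_krylov H1 H2]; apply/orth_krylov => k.
    rewrite ltnS leq_eqVlt => /orP [/eqP -> //|]; exact: H1.
  rewrite HQ addnS /=.
  apply/img_subP/img_subP.
    move=> [y]; rewrite sub_capmx => /andP [yG yP] ->.
    move: yG; rewrite IH => /img_subP [z]; rewrite sub_capmx => /andP [zG zK] yE.
    exists z.
      rewrite sub_capmx zG /=; apply/Kspl; split => //.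
      move/orth_krylov: (zK) => zK'.
      by rewrite -(@lead_orth R _ A P _ _ _ c1 c2 zK') -yE.
    by rewrite yE trmx_mul mulmxA.
  move=> [z]; rewrite sub_capmx => /andP [zG /Kspl [zK zA]] ->.
  exists (z *m Q^T); last by rewrite trmx_mul mulmxA.
  rewrite sub_capmx; apply/andP; split.
    rewrite IH; apply/img_subP; exists z => //; by rewrite sub_capmx zG zK.
  move/orth_krylov: (zK) => zK'.
  by rewrite (@lead_orth R _ A P _ _ _ c1 c2 zK').
have -> : j = (i + (j - i))%N by rewrite subnKC // ltnW.
rewrite addKn; apply: eqv; exact: main.
Qed.
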